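(* For every integer $q\geq 1$, the graph $2*Q_q$ divides $Q_{2q}$.
   Context: $Q_q$ denotes the $q$-dimensional hypercube graph (vertices are $q$-tuples of $0$'s and $1$'s, adjacent iff they differ in exactly one coordinate). For a graph $G$, the $2$-stretch $2*G$ is the graph obtained from $G$ by replacing each edge by a path with $2$ edges (i.e. subdividing each edge once). For graphs $H$ and $G$, ''$H$ divides $G$'' means there is a collection of subgraphs $H_i$ of $G$, each isomorphic to $H$, such that $E(G)$ is the disjoint union of the edge sets $E(H_i)$. *)

(* Defs.v *)
(* Simple graphs are given by a finite vertex type V and an
   adjacency relation e : rel V (symmetric, irreflexive for the graphs used). *)
From mathcomp Require Import all_boot.
Set Implicit Arguments. Unset Strict Implicit. Unset Printing Implicit Defensive.

Definition edges (V : finType) (e : rel V) : {set {set V}} :=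
  [set E : {set V} | [exists x : V, exists y : V, e x y && (E == [set x; y])]].

Definition hcube_vert (q : nat) : finType := {ffun 'I_q -> bool}.
Definition hcube (q : nat) : rel (hcube_vert q) :=
  fun u v => #|[set i | u i != v i]| == 1.
Arguments hcube q : clear implicits.

(* The 2-stretch 2*G: original vertices plus one new vertex per edge,
   the new vertex of edge {x,y} being adjacent to x and y. *)
Definition edge_sub (V : finType) (e : rel V) : finType :=
  {E : {set V} | E \in edges e}.
Definition stretch_vert (V : finType) (e : rel V) : finType :=
  (V + edge_sub e)%type.
Definition stretch (V : finType) (e : rel V) : rel (stretch_vert e) :=
  fun a b =>
    match a, b with
    | inl x, inr E => x \in val E
    | inr E, inl x => x \in val E
    | _, _ => false
    end.
Arguments stretch {V} e.

(* H divides G: there are copies H_i (i < n) of H in G, given by injective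
   graph homomorphisms f i : V_H -> V_G (H_i = image of f i, with edge set the
   image of E(H)), such that E(G) is the disjoint union of the E(H_i): every
   edge of G is the image of exactly one pair (copy i, edge of H). *)
Definition divides (VH : finType) (h : rel VH) (VG : finType) (g : rel VG) :=
  exists (n : nat) (f : 'I_n -> VH -> VG),
    [/\ forall i, injective (f i),
        forall i x y, h x y -> g (f i x) (f i y) &
        forall E, E \in edges g ->
          #|[set p : 'I_n * {set VH} | (p.2 \in edges h) && (f p.1 @: p.2 == E)]| = 1].

(* Main.v *)
Require Import Defs.
From mathcomp Require Import all_boot.
From mathcomp Require Import zify.
Set Implicit Arguments. Unset Strict Implicit. Unset Printing Implicit Defensive.

Definition xorv n (u v : {ffun 'I_n -> bool}) : {ffun 'I_n -> bool} := [ffun i => u i (+) v i].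
Definition ev n (i : 'I_n) : {ffun 'I_n -> bool} := [ffun j => j == i].
Definition flip n (i : 'I_n) (u : {ffun 'I_n -> bool}) := xorv u (ev i).
Definition par n (u : {ffun 'I_n -> bool}) := \big[addb/false]_(i < n) u i.

Lemma flipK n (i : 'I_n) : involutive (flip i).
Proof. by move=> u; apply/ffunP => j; rewrite !ffunE -addbA addbb addbF. Qed.

Lemma flip_inj n (i : 'I_n) : injective (flip i).
Proof. exact: inv_inj (flipK i). Qed.

Lemma flipE n (i j : 'I_n) u : flip i u j = u j (+) (j == i).
Proof. by rewrite !ffunE. Qed.

Lemma par_xor n (u v : {ffun 'I_n -> bool}) : par (xorv u v) = par u (+) par v.
Proof. by rewrite /par -big_split /=; apply: eq_bigr => i _; rewrite ffunE. Qed.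

Lemma par_ev n (i : 'I_n) : par (ev i) = true.
Proof.
rewrite /par (bigD1 i) //= ffunE eqxx big1 // => j /negbTE.
by rewrite ffunE.
Qed.

Lemma par_flip n (i : 'I_n) u : par (flip i u) = ~~ par u.
Proof. by rewrite par_xor par_ev addbT. Qed.

Lemma xorv_flip n (i : 'I_n) u d : xorv (flip i u) d = flip i (xorv u d).
Proof. by apply/ffunP => j; rewrite /flip !ffunE addbAC. Qed.

Lemma xorvK n (u d : {ffun 'I_n -> bool}) : xorv (xorv u d) d = u.
Proof. by apply/ffunP => j; rewrite !ffunE -addbA addbb addbF. Qed.

Lemma xorv_inj n (d u v : {ffun 'I_n -> bool}) : xorv u d = xorv v d -> u = v.
Proof. by move=> h; rewrite -(xorvK u d) h xorvK. Qed.

Lemma xorvKl n (u d : {ffun 'I_n -> bool}) : xorv u (xorv u d) = d.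
Proof. by apply/ffunP => j; rewrite !ffunE addbA addbb. Qed.

Lemma hcubeP n (u v : {ffun 'I_n -> bool}) :
  reflect (exists i, v = flip i u) (hcube n u v).
Proof.
apply: (iffP cards1P) => [[i Hi]|[i ->]]; exists i.
  apply/ffunP => j; rewrite flipE.
  move/setP: Hi => /(_ j); rewrite !inE.
  by move=> <-; case: (u j); case: (v j).
apply/setP => j; rewrite !inE flipE.
by case: (u j); case: (j == i).
Qed.

Lemma hcube_flip n (i : 'I_n) u : hcube n u (flip i u).
Proof. by apply/hcubeP; exists i. Qed.

Lemma hcube_flip' n (i : 'I_n) u : hcube n (flip i u) u.
Proof. by apply/hcubeP; exists i; rewrite flipK. Qed.

Lemma edgesP (V : finType) (e : rel V) E :
  reflect (exists x y, e x y /\ E = [set x; y]) (E \in edges e).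
Proof.
rewrite inE; apply: (iffP existsP) => [[x /existsP [y /andP [h /eqP ->]]]|[x [y [h ->]]]].
  by exists x, y.
by exists x; apply/existsP; exists y; rewrite h eqxx.
Qed.

Lemma imset_pair (A B : finType) (f : A -> B) a b : f @: [set a; b] = [set f a; f b].
Proof. by rewrite imsetU1 imset_set1. Qed.

Lemma set2_sep (T : finType) (s : T -> bool) (a b c d : T) :
  [set a; b] = [set c; d] -> s a = false -> s b = true -> s c = false -> s d = true ->
  a = c /\ b = d.
Proof.
move=> E sa sb sc sd.
have : a \in [set c; d] by rewrite -E set21.
have : b \in [set c; d] by rewrite -E set22.
case/set2P => [eb|->]; first by move: sb sc; rewrite eb => ->.
case/set2P => [->|ea] //; by move: sa sd; rewrite ea => ->.
Qed.

Lemma wid_proof p (i : 'I_p.+1) : i < 2 * p.+1.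
Proof. have := ltn_ord i; lia. Qed.
Lemma shf_proof p (i : 'I_p.+1) : i + p.+1 < 2 * p.+1.
Proof. have := ltn_ord i; lia. Qed.
Definition wid p (i : 'I_p.+1) : 'I_(2 * p.+1) := Ordinal (wid_proof i).
Definition shf p (i : 'I_p.+1) : 'I_(2 * p.+1) := Ordinal (shf_proof i).

Lemma wid_inj p : injective (@wid p).
Proof. by move=> i j /(congr1 val) /= /val_inj. Qed.
Lemma shf_inj p : injective (@shf p).
Proof. by move=> i j /(congr1 val) /= /addIn /val_inj. Qed.
Lemma wid_shf p (i j : 'I_p.+1) : (wid i == shf j) = false.
Proof. apply/eqP => /(congr1 val) /=; have := ltn_ord i; lia. Qed.
Lemma shf_wid p (i j : 'I_p.+1) : (shf i == wid j) = false.
Proof. by rewrite eq_sym wid_shf. Qed.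

Lemma ord_split p (j : 'I_(2 * p.+1)) : (exists i, j = wid i) \/ (exists i, j = shf i).
Proof.
case: (ltnP j p.+1) => h.
  by left; exists (Ordinal h); apply: val_inj.
have h2 : j - p.+1 < p.+1 by have := ltn_ord j; lia.
by right; exists (Ordinal h2); apply: val_inj => /=; lia.
Qed.

Definition lo p (w : {ffun 'I_(2 * p.+1) -> bool}) : {ffun 'I_p.+1 -> bool} :=
  [ffun i => w (wid i)].
Definition hi p (w : {ffun 'I_(2 * p.+1) -> bool}) : {ffun 'I_p.+1 -> bool} :=
  [ffun i => w (shf i)].
Definition join p (u v : {ffun 'I_p.+1 -> bool}) : {ffun 'I_(2 * p.+1) -> bool} :=
  [ffun j : 'I_(2 * p.+1) => if j < p.+1 then u (inord j) else v (inord (j - p.+1))].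

Lemma lo_join p (u v : {ffun 'I_p.+1 -> bool}) : lo (join u v) = u.
Proof.
apply/ffunP => i; rewrite !ffunE /= ltn_ord.
by congr (u _); apply: val_inj; rewrite /= inordK.
Qed.
Lemma hi_join p (u v : {ffun 'I_p.+1 -> bool}) : hi (join u v) = v.
Proof.
apply/ffunP => i; rewrite !ffunE /=.
have -> : (i + p.+1 < p.+1) = false by lia.
by congr (v _); apply: val_inj; rewrite /= addnK inordK.
Qed.

Lemma eq_lohi p (w w' : {ffun 'I_(2 * p.+1) -> bool}) :
  lo w = lo w' -> hi w = hi w' -> w = w'.
Proof.
move=> h1 h2; apply/ffunP => j.
case: (ord_split j) => [[i ->]|[i ->]].
  by move/ffunP: h1 => /(_ i); rewrite !ffunE.
by move/ffunP: h2 => /(_ i); rewrite !ffunE.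
Qed.

Lemma join_lohi p (w : {ffun 'I_(2 * p.+1) -> bool}) : join (lo w) (hi w) = w.
Proof. by apply: eq_lohi; rewrite ?lo_join ?hi_join. Qed.

Lemma join_inj p (u v u' v' : {ffun 'I_p.+1 -> bool}) :
  join u v = join u' v' -> u = u' /\ v = v'.
Proof.
move=> h; split; first by rewrite -(lo_join u v) h lo_join.
by rewrite -(hi_join u v) h hi_join.
Qed.

Lemma lo_flip_wid p i (w : {ffun 'I_(2 * p.+1) -> bool}) : lo (flip (wid i) w) = flip i (lo w).
Proof. by apply/ffunP => k; rewrite !ffunE (inj_eq (@wid_inj p)). Qed.
Lemma hi_flip_wid p i (w : {ffun 'I_(2 * p.+1) -> bool}) : hi (flip (wid i) w) = hi w.
Proof. by apply/ffunP => k; rewrite !ffunE shf_wid addbF. Qed.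
Lemma lo_flip_shf p i (w : {ffun 'I_(2 * p.+1) -> bool}) : lo (flip (shf i) w) = lo w.
Proof. by apply/ffunP => k; rewrite !ffunE wid_shf addbF. Qed.
Lemma hi_flip_shf p i (w : {ffun 'I_(2 * p.+1) -> bool}) : hi (flip (shf i) w) = flip i (hi w).
Proof. by apply/ffunP => k; rewrite !ffunE (inj_eq (@shf_inj p)). Qed.

Lemma hcube_join p (u v u' v' : {ffun 'I_p.+1 -> bool}) :
  hcube (2 * p.+1) (join u v) (join u' v') <->
  ((exists i, u' = flip i u) /\ v' = v) \/ (u' = u /\ exists i, v' = flip i v).
Proof.
split.
  case/hcubeP => j; case: (ord_split j) => [[i ->]|[i ->]] h.
    left; split; first exists i.
      by rewrite -(lo_join u' v') h lo_flip_wid lo_join.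
    by rewrite -(hi_join u' v') h hi_flip_wid hi_join.
  right; split; last exists i.
    by rewrite -(lo_join u' v') h lo_flip_shf lo_join.
  by rewrite -(hi_join u' v') h hi_flip_shf hi_join.
case=> [[[i ->] ->]|[-> [i ->]]]; apply/hcubeP.
  exists (wid i); apply: eq_lohi; by rewrite ?lo_flip_wid ?hi_flip_wid ?lo_join ?hi_join.
exists (shf i); apply: eq_lohi; by rewrite ?lo_flip_shf ?hi_flip_shf ?lo_join ?hi_join.
Qed.

Definition andS n (M : {set {ffun 'I_n -> bool}}) : {ffun 'I_n -> bool} :=
  [ffun j => [forall x in M, x j]].
Definition orS n (M : {set {ffun 'I_n -> bool}}) : {ffun 'I_n -> bool} :=
  [ffun j => [exists x in M, x j]].

Lemma andS2 n (x y : {ffun 'I_n -> bool}) : andS [set x; y] = [ffun j => x j && y j].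
Proof.
apply/ffunP => j; rewrite !ffunE.
apply/forall_inP/andP => [h|[h1 h2] z /set2P [] ->] //.
by split; apply: h; rewrite ?set21 ?set22.
Qed.
Lemma orS2 n (x y : {ffun 'I_n -> bool}) : orS [set x; y] = [ffun j => x j || y j].
Proof.
apply/ffunP => j; rewrite !ffunE.
apply/exists_inP/orP => [[z /set2P [] -> h]|[h|h]]; [by left|by right| |].
  by exists x; rewrite ?set21.
by exists y; rewrite ?set22.
Qed.

Lemma andS_nf n (m : {ffun 'I_n -> bool}) i : m i = false -> andS [set m; flip i m] = m.
Proof.
move=> mi; apply/ffunP => j; rewrite andS2 !ffunE.
by case: eqP => [->|_]; rewrite ?mi ?addbF ?andbb.
Qed.
Lemma orS_nf n (m : {ffun 'I_n -> bool}) i : m i = false -> orS [set m; flip i m] = flip i m.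
Proof.
move=> mi; apply/ffunP => j; rewrite orS2 !ffunE.
by case: eqP => [->|_]; rewrite ?mi ?addbF ?orbb.
Qed.

Lemma hedge_nf n (M : {set {ffun 'I_n -> bool}}) :
  M \in edges (hcube n) -> exists (m : {ffun 'I_n -> bool}) (i : 'I_n), m i = false /\ M = [set m; flip i m].
Proof.
case/edgesP => x [y [/hcubeP [i ->] ->]].
case h: (x i); last by exists x, i.
exists (flip i x), i; split; first by rewrite flipE h eqxx.
by rewrite flipK setUC.
Qed.

Definition dd p (a : {ffun 'I_p.+1 -> bool}) := if par a then flip ord0 a else a.
Definition mid p (a : {ffun 'I_p.+1 -> bool}) (M : {set {ffun 'I_p.+1 -> bool}}) :=
  if par a then join (andS M) (xorv (orS M) (dd a))
  else join (orS M) (xorv (andS M) (dd a)).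
Definition F p (a : {ffun 'I_p.+1 -> bool}) (s : stretch_vert (hcube p.+1)) :
  {ffun 'I_(2 * p.+1) -> bool} :=
  match s with inl x => join x (xorv x (dd a)) | inr M => mid a (val M) end.

Lemma F_mid p (a : {ffun 'I_p.+1 -> bool}) (M : edge_sub (hcube p.+1)) (m : {ffun 'I_p.+1 -> bool}) (i : 'I_p.+1) : m i = false -> val M = [set m; flip i m] ->
  F a (inr M) = if par a then join m (flip i (xorv m (dd a)))
                else join (flip i m) (xorv m (dd a)).
Proof. by move=> mi hM /=; rewrite /mid hM andS_nf // orS_nf // xorv_flip. Qed.

Lemma nfM p (M : edge_sub (hcube p.+1)) :
  exists (m : {ffun 'I_p.+1 -> bool}) (i : 'I_p.+1), m i = false /\ val M = [set m; flip i m].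
Proof. exact: hedge_nf (valP M). Qed.

Lemma par_dd p (a : {ffun 'I_p.+1 -> bool}) : par (dd a) = false.
Proof. by rewrite /dd; case: ifP => h; rewrite ?par_flip h. Qed.

Definition sig p (w : {ffun 'I_(2 * p.+1) -> bool}) := par (xorv (lo w) (hi w)).

Lemma sig_orig p a x : sig (@F p a (inl x)) = false.
Proof. by rewrite /sig /= lo_join hi_join !par_xor addbA addbb par_dd. Qed.

Lemma sig_mid p a M : sig (@F p a (inr M)) = true.
Proof.
have [m [i [mi hM]]] := nfM M; rewrite (F_mid a mi hM).
by case: (par a); rewrite /sig lo_join hi_join !(par_xor, par_flip) par_dd; case: (par m).
Qed.

Lemma flip_eq n (i i' : 'I_n) m : flip i m = flip i' m -> i = i'.
Proof.
move/ffunP => /(_ i); rewrite !flipE eqxx.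
by case: (m i); case: eqP.
Qed.

Lemma F_inj p a : injective (@F p a).
Proof.
case=> [x|M] [y|M'].
- by case/join_inj => ->.
- by move=> h; have := sig_orig a x; rewrite h sig_mid.
- by move=> h; have := sig_mid a M; rewrite h sig_orig.
have [m [i [mi hM]]] := nfM M; have [m' [i' [mi' hM']]] := nfM M'.
rewrite (F_mid a mi hM) (F_mid a mi' hM').
case: (par a) => /join_inj [e1 e2].
  subst m'; have ei := flip_eq (etrans e2 (congr1 (flip i') (erefl _))).
  by congr inr; apply: val_inj; rewrite hM hM' ei.
have em : m = m' by apply: xorv_inj e2.
subst m'; have ei := flip_eq e1.
by congr inr; apply: val_inj; rewrite hM hM' ei.
Qed.

Lemma hcube_sym n (u v : {ffun 'I_n -> bool}) : hcube n u v = hcube n v u.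
Proof.
by apply/hcubeP/hcubeP => [[i ->]|[i ->]]; exists i; rewrite flipK.
Qed.

Lemma F_hom0 p a x (M : edge_sub (hcube p.+1)) : x \in val M ->
  hcube (2 * p.+1) (F a (inl x)) (F a (inr M)).
Proof.
have [m [i [mi hM]]] := nfM M; rewrite (F_mid a mi hM) hM /=.
case/set2P => ->; case: (par a); apply/hcube_join.
- by right; split => //; exists i.
- by left; split => //; exists i.
- by left; split; [exists i; rewrite flipK | rewrite xorv_flip].
- by right; split => //; exists i; rewrite xorv_flip flipK.
Qed.


Lemma F_hom p a (x y : stretch_vert (hcube p.+1)) :
  stretch (hcube p.+1) x y -> hcube (2 * p.+1) (F a x) (F a y).
Proof.
case: x => [x|M]; case: y => [y|M'] //= h.
  exact: F_hom0.
by rewrite hcube_sym; apply: F_hom0.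
Qed.

Lemma mix_false p (m m' d : {ffun 'I_p.+1 -> bool}) (i i' : 'I_p.+1) :
  join m' (flip i' (xorv m' d)) = join (flip i m) (xorv m d) ->
  m' i' = false -> m i = false -> False.
Proof.
case/join_inj => e1 e2 mi' mi; subst m'.
move: e2; rewrite xorv_flip => e2.
have ei : i = i'.
  by apply: (@flip_eq _ _ _ (xorv m d)); rewrite -{2}e2 flipK.
by move: mi'; rewrite -ei flipE mi eqxx.
Qed.

Lemma dd_inj p (a a' : {ffun 'I_p.+1 -> bool}) : dd a' = dd a -> par a' = par a -> a' = a.
Proof. by rewrite /dd => h e; move: h; rewrite e; case: (par a) => // /flip_inj. Qed.

Lemma F_uniq p (a a' x x' : {ffun 'I_p.+1 -> bool}) (M M' : edge_sub (hcube p.+1)) :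
  F a' (inl x') = F a (inl x) -> F a' (inr M') = F a (inr M) -> a' = a.
Proof.
case/join_inj => ex ed; subst x'.
have {ed} ed : dd a' = dd a by rewrite -(xorvKl x (dd a')) ed xorvKl.
have [m [i [mi hM]]] := nfM M; have [m' [i' [mi' hM']]] := nfM M'.
rewrite (F_mid a mi hM) (F_mid a' mi' hM') ed.
case ea: (par a); case ea': (par a') => h.
- by apply: dd_inj => //; rewrite ea ea'.
- by case: (mix_false (esym h) mi mi').
- by case: (mix_false h mi' mi).
- by apply: dd_inj => //; rewrite ea ea'.
Qed.

Lemma mkE_proof p (x : {ffun 'I_p.+1 -> bool}) i : [set x; flip i x] \in edges (hcube p.+1).
Proof. by apply/edgesP; exists x, (flip i x); split => //; exact: hcube_flip. Qed.
Definition mkE p (x : {ffun 'I_p.+1 -> bool}) i : edge_sub (hcube p.+1) :=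
  exist _ [set x; flip i x] (mkE_proof x i).

Lemma choose_a p (d : {ffun 'I_p.+1 -> bool}) (t : bool) : par d = false ->
  dd (if t then flip ord0 d else d) = d /\ par (if t then flip ord0 d else d) = t.
Proof.
by case: t => hd; rewrite /dd ?par_flip hd //= flipK.
Qed.

Lemma sig_flip p (w w' : {ffun 'I_(2 * p.+1) -> bool}) :
  hcube (2 * p.+1) w w' -> sig w' = ~~ sig w.
Proof.
rewrite -(join_lohi w) -(join_lohi w') /sig !lo_join !hi_join.
case/hcube_join => [[[i ->] ->]|[-> [i ->]]]; rewrite !(par_xor, par_flip);
  by case: (par (lo w)); case: (par (hi w)).
Qed.

Lemma F_exist p (w w' : {ffun 'I_(2 * p.+1) -> bool}) :
  hcube (2 * p.+1) w w' -> sig w = false ->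
  exists a x (M : edge_sub (hcube p.+1)), x \in val M /\ F a (inl x) = w /\ F a (inr M) = w'.
Proof.
rewrite -(join_lohi w) -(join_lohi w') /sig !lo_join !hi_join.
set u := lo w; set v := hi w; set u' := lo w'; set v' := hi w'.
move=> hw hd.
set d := xorv u v.
have hv : xorv u d = v by rewrite xorvKl.
case/hcube_join: hw => [[[i ->] ->]|[-> [i ->]]].
- have [da pa] := choose_a (u i) hd.
  move: (if u i then flip ord0 d else d) da pa => a da pa.
  exists a, u, (mkE u i); split; first exact: set21.
  split; first by rewrite /= da hv.
  case ui: (u i).
    have mi : flip i u i = false by rewrite flipE ui eqxx.
    have hM : val (mkE u i) = [set flip i u; flip i (flip i u)] by rewrite flipK setUC.
    by rewrite (F_mid _ mi hM) pa da ui xorv_flip flipK xorvKl.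
  by rewrite (@F_mid _ a (mkE u i) _ _ ui (erefl _)) pa da ui xorvKl.
- have [da pa] := choose_a (~~ u i) hd.
  move: (if ~~ u i then flip ord0 d else d) da pa => a da pa.
  exists a, u, (mkE u i); split; first exact: set21.
  split; first by rewrite /= da hv.
  case ui: (u i).
    have mi : flip i u i = false by rewrite flipE ui eqxx.
    have hM : val (mkE u i) = [set flip i u; flip i (flip i u)] by rewrite flipK setUC.
    by rewrite (F_mid _ mi hM) pa ui da flipK xorv_flip xorvKl.
  by rewrite (@F_mid _ a (mkE u i) _ _ ui (erefl _)) pa ui da xorvKl.
Qed.

Lemma sedgeP p (S : {set stretch_vert (hcube p.+1)}) :
  S \in edges (stretch (hcube p.+1)) ->
  exists x (M : edge_sub (hcube p.+1)), x \in val M /\ S = [set inl x; inr M].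
Proof.
case/edgesP => [[x|M] [[y|M'] [//= h ->]]].
  by exists x, M'.
by exists y, M; split => //; rewrite setUC.
Qed.

Theorem proposition2 (q : nat) : 1 <= q -> divides (stretch (hcube q)) (hcube (2 * q)).
Proof.
case: q => [//|p] _.
exists #|{ffun 'I_p.+1 -> bool}|, (fun k => F (enum_val k)); split.
- by move=> k; apply: F_inj.
- by move=> k x y; apply: F_hom.
move=> E /edgesP [w0 [w0' [hw0 ->]]].
have [w [w' [hw [hs ->]]]] : exists w w', hcube (2 * p.+1) w w' /\ sig w = false /\
    [set w0; w0'] = [set w; w'].
  case s0: (sig w0); last by exists w0, w0'.
  exists w0', w0; split; first by rewrite hcube_sym.
  by rewrite (sig_flip hw0) s0 setUC.
have [a [x [M [xM [ex eM]]]]] := F_exist hw hs.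
apply/eqP/cards1P; exists (enum_rank a, [set inl x; inr M]).
apply/setP => [[k S]]; rewrite in_set1 in_set /=.
apply/andP/eqP => [[/(@sedgeP p) [x' [M' [xM' ->]]] /eqP]|[-> ->]].
  rewrite imset_pair -ex -eM => h.
  have [h1 h2] := set2_sep (s:=@sig p) h (sig_orig _ _) (sig_mid _ _) (sig_orig _ _) (sig_mid _ _).
  have ea := F_uniq h1 h2.
  move: h1 h2; rewrite ea => /F_inj -> /F_inj ->.
  by rewrite -ea enum_valK.
split.
  by apply/edgesP; exists (inl x), (inr M).
by rewrite imset_pair enum_rankK ex eM.
Qed.
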